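(* Let $k\subset K$ be a finite totally ramified Galois extension of complete discrete valuation fields with Galois group $G$ and degree $n$, and let $B\subset K[G]\setminus\{0\}$ be a finite graded-independent set. 1. Let $c:B\to k$ be a function which is not identically zero, and let $m=\min\{v(c_b)+d(b):\ b\in B,\ c_b\ne0\}$. Then $d(\sum_{b\in B}c_bb)=m$, and $\mathfrak p(\sum_{b\in B}c_bb)=\sum_{b}\lambda_b\,\mathfrak p(b)$, the sum over those $b\in B$ with $c_b\neq 0$ and $v(c_b)+d(b)=m$, for some nonzero $\lambda_b\in\bar k$. 2. For every $i\in\mathbb Z$, $\mathfrak C_i\cap\big(\bigoplus_{b\in B}k\cdot b\big)=\bigoplus_{b\in B}\pi_k^{\lfloor(i-d-d(b)-1)/n\rfloor+1}O_k\cdot b$. Moreover, if $B$ has exactly $n$ elements and $B\subset k[G]$, then $B$ is a graded base for $K/k$.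
   Context: $O_k$, $O_K$ are the rings of integers, $\pi_k$ a uniformizer of $k$, $\pi$ a uniformizer of $K$, $\bar k$ the residue field, $r:O_K\to\bar k$ reduction, $v$ the valuation of $K$ with $v(K^* )=\mathbb Z$, $d=v(\mathfrak D_{K/k})-n+1$ the ramification depth ($\mathfrak D_{K/k}$ the different), $c_\pi=\mathrm{Tr}_{K/k}(\pi^{-d})\in O_k^*$, $R=\bar k[X]/(X^n-1)$. $f=\sum a_\sigma\sigma\in K[G]$ acts on $K$ by $f(x)=\sum a_\sigma\sigma(x)$. $\mathfrak C_i=\{f\in K[G]: v(f(x))-v(x)\ge i\ \forall x\in K^*\}$. For $f\in\mathfrak C_i$, $p_i(f)=r(c_\pi)^{-1}\sum_{j=0}^{n-1}r(f(\pi^{j-i})/\pi^j)X^j\in R$. For $f\ne0$: $d(f)=i$ iff $f\in\mathfrak C_{i+d}\setminus\mathfrak C_{i+d+1}$, and $\mathfrak p(f)=p_{d(f)+d}(f)$. For $B\subset K[G]\setminus\{0\}$ and $s\in\mathbb Z$, $B_s=\{f\in B: d(f)\equiv s\bmod n\}$; $B$ is graded-independent if for every $s$ the family $(\mathfrak p(b))_{b\in B_s}$ is $\bar k$-linearly independent in $R$; $B$ is a graded base for $K/k$ if $B\subset k[G]$ is graded-independent and generates $k[G]$ as a $k$-vector space. *)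

(* Defs.v *)
From HB Require Import structures.
From mathcomp Require Import all_boot all_order all_algebra all_fingroup all_field.
From Stdlib Require Import ClassicalEpsilon.
Set Implicit Arguments. Unset Strict Implicit. Unset Printing Implicit Defensive.
Import Order.TTheory GRing.Theory Num.Theory.
Local Open Scope ring_scope.

Section Defs.
Variables (F : fieldType) (L : splittingFieldType F).

Definition galG := gal_of (fullv : {vspace L}).

(* The group ring K[G], K = L: finitely supported coefficient functions. *)
Definition KG := {ffun galG -> L}.

Definition act (f : KG) (x : L) : L := \sum_(s : galG) f s * s x.

(* k[G]: coefficients in k = 1%VS *)
Definition in_kG (f : KG) : Prop := forall s, f s \in (1%VS : {vspace L}).

(* v : L -> int is meaningful on nonzero elements; v 0 is irrelevant. *)
Variable v : L -> int.

(* "v(x) >= m", with v(0) = +oo *)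
Definition vge (x : L) (m : int) : Prop := x = 0 \/ m <= v x.

Definition is_dval : Prop :=
  [/\ forall x y, x != 0 -> y != 0 -> v (x * y) = v x + v y,
      forall x y, x != 0 -> y != 0 -> x + y != 0 -> Num.min (v x) (v y) <= v (x + y)
    & exists x, x != 0 /\ v x = 1].

Definition cauchy (u : nat -> L) : Prop :=
  forall M : int, exists N, forall p q, (N <= p)%N -> (N <= q)%N -> vge (u p - u q) M.
Definition converges_to (u : nat -> L) (l : L) : Prop :=
  forall M : int, exists N, forall p, (N <= p)%N -> vge (u p - l) M.

Definition complete_K : Prop := forall u, cauchy u -> exists l, converges_to u l.
Definition complete_k : Prop :=
  forall u, (forall p, u p \in (1%VS : {vspace L})) -> cauchy u ->
  exists2 l, l \in (1%VS : {vspace L}) & converges_to u l.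

Definition totally_ramified : Prop :=
  (forall x : F, x != 0 -> ((\dim (fullv : {vspace L}))%:Z %| v x%:A)%Z) /\
  exists x : F, x != 0 /\ v x%:A = (\dim (fullv : {vspace L}))%:Z.

Definition residue_map (kbar : fieldType) (r : L -> kbar) : Prop :=
  [/\ forall x y, vge x 0 -> vge y 0 -> r (x + y) = r x + r y,
      forall x y, vge x 0 -> vge y 0 -> r (x * y) = r x * r y,
      r 1 = 1,
      forall a, exists2 x, vge x 0 & r x = a
    & forall x, vge x 0 -> (r x = 0 <-> vge x 1)].

(* delta = v(D_{K/k}): the inverse different {x | Tr(x O_K) <= O_k} equals
   {x | v x >= - delta}. Trace Tr_{K/k} = galTrace. *)
Definition different_val (delta : int) : Prop :=
  forall x : L, (forall y, vge y 0 -> vge (galTrace 1 fullv (x * y)) 0) <->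
                vge x (- delta).

Definition inC (i : int) (f : KG) : Prop :=
  forall x : L, x != 0 -> act f x = 0 \/ v x + i <= v (act f x).

(* d(f) for f != 0: the unique i with f in C_{i+d} \ C_{i+d+1} (0 if none) *)
Definition depth (d : int) (f : KG) : int :=
  match excluded_middle_informative
          (exists i : int, inC (i + d) f /\ ~ inC (i + d + 1) f) with
  | left h => proj1_sig (constructive_indefinite_description _ h)
  | right _ => 0
  end.

(* p_i(f) in R = kbar[X]/(X^n - 1), represented by its reduced polynomial
   of degree < n *)
Definition p_ (kbar : fieldType) (r : L -> kbar) (d : int) (pi : L)
  (i : int) (f : KG) : {poly kbar} :=
  let n := \dim (fullv : {vspace L}) in
  let cpi := galTrace 1 fullv (pi ^ (- d)) in
  \sum_(j < n) ((r cpi)^-1 * r (act f (pi ^ (j%:Z - i)) / pi ^+ j))%:P * 'X^j.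

Definition frakp (kbar : fieldType) (r : L -> kbar) (d : int) (pi : L)
  (f : KG) : {poly kbar} := p_ r d pi (depth d f + d) f.

(* graded independence of the finite set B (a duplicate-free list) *)
Definition graded_independent (kbar : fieldType) (r : L -> kbar) (d : int)
  (pi : L) (B : seq KG) : Prop :=
  forall (s : int) (lam : KG -> kbar),
    \sum_(b <- B | (depth d b == s %[mod (\dim (fullv : {vspace L}))%:Z])%Z)
        lam b *: frakp r d pi b = 0 ->
    forall b, b \in B -> (depth d b == s %[mod (\dim (fullv : {vspace L}))%:Z])%Z ->
      lam b = 0.

Definition lincomb (B : seq KG) (c : KG -> F) : KG :=
  [ffun s => \sum_(b <- B) (c b)%:A * b s].

Definition graded_base (kbar : fieldType) (r : L -> kbar) (d : int)
  (pi : L) (B : seq KG) : Prop :=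
  [/\ forall b, b \in B -> in_kG b,
      graded_independent r d pi B
    & forall f, in_kG f -> exists c : KG -> F, f = lincomb B c].

End Defs.

(* Main.v *)
Require Import Defs.
From HB Require Import structures.
From mathcomp Require Import all_boot all_order all_algebra all_fingroup all_field.
From mathcomp Require Import zify.
From Stdlib Require Import ClassicalEpsilon.
Import Order.TTheory GRing.Theory Num.Theory.
Local Open Scope ring_scope.



Lemma ex_minz {T : eqType} {s : seq T} {P : pred T} (g : T -> int) :
  has P s ->
  exists x, [/\ x \in s, P x & forall y, y \in s -> P y -> g x <= g y].
Proof.
elim: s => [//|z s IH] /=.
have [hs|hs] := boolP (has P s).
  have [y [ys Py hy]] := IH hs => _.
  have [Pz|Pz] := boolP (P z); last first.
    exists y; split; rewrite ?inE ?ys ?orbT //.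
    by move=> w; rewrite inE => /orP[/eqP->|ws] Pw; [rewrite Pw in Pz|apply: hy].
  have [le|lt] := lerP (g z) (g y).
    exists z; split; rewrite ?inE ?eqxx //.
    move=> w; rewrite inE => /orP[/eqP->//|ws] Pw; exact: le_trans le (hy _ ws Pw).
  exists y; split; rewrite ?inE ?ys ?orbT //.
  move=> w; rewrite inE => /orP[/eqP->|ws] Pw; [exact: ltW | exact: hy].
rewrite orbF => Pz; exists z; split; rewrite ?inE ?eqxx //.
move=> w; rewrite inE => /orP[/eqP->//|ws] Pw.
by move/hasPn: hs => /(_ w ws); rewrite Pw.
Qed.

Lemma fixA (F : fieldType) (L : splittingFieldType F) (s : galG L) (a : F) :
  s (a%:A) = a%:A.
Proof. by rewrite -[a%:A]/(a *: 1) linearZ /= rmorph1. Qed.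

Lemma algA_eq0 (F : fieldType) (L : splittingFieldType F) (a : F) :
  (a%:A == 0 :> L) = (a == 0).
Proof. by rewrite -[a%:A]/(a *: (1 : L)) scaler_eq0 oner_eq0 orbF. Qed.


Lemma alg_div (F : fieldType) (L : splittingFieldType F) (a b : F) :
  (a / b)%:A = a%:A / b%:A :> L.
Proof. by have := fmorph_div (in_alg L) a b; apply. Qed.
Lemma alg_mul (F : fieldType) (L : splittingFieldType F) (a b : F) :
  (a * b)%:A = a%:A * b%:A :> L.
Proof. by rewrite -[_%:A]/(in_alg L _) rmorphM. Qed.
Lemma alg_X (F : fieldType) (L : splittingFieldType F) (a : F) (e : int) :
  (a ^ e)%:A = a%:A ^ e :> L.
Proof. by have := fmorphXz (in_alg L) e a; apply. Qed.
Section Val.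
Variables (F : fieldType) (L : splittingFieldType F).
Variable v : L -> int.
Hypothesis Hv : is_dval v.

Lemma vM {x y} : x != 0 -> y != 0 -> v (x * y) = v x + v y.
Proof. by move: Hv; rewrite /is_dval => -[h _ _]; apply: h. Qed.

Lemma v1 : v 1 = 0.
Proof. have h : v ((1 : L) * 1) = v 1 + v 1 by rewrite vM ?oner_neq0. rewrite mulr1 in h; lia. Qed.

Lemma vN x : x != 0 -> v (- x) = v x.
Proof.
move=> x0; have x0' : - x != 0 by rewrite oppr_eq0.
have := vM x0' x0'; rewrite mulrNN vM //; lia.
Qed.

Lemma vV x : x != 0 -> v x^-1 = - v x.
Proof.
move=> x0; have := vM x0 (invr_neq0 x0); rewrite mulfV // v1; lia.
Qed.

Lemma vXn x k : x != 0 -> v (x ^+ k) = k%:Z * v x.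
Proof.
move=> x0; elim: k => [|k IH]; first by rewrite expr0 v1 mul0r.
rewrite exprS vM ?expf_neq0 // IH; lia.
Qed.

Lemma vXz x (z : int) : x != 0 -> v (x ^ z) = z * v x.
Proof.
move=> x0; case: z => k; first by rewrite vXn.
rewrite -[x ^ Negz k]/((x ^+ k.+1)^-1) vV ?expf_neq0 // vXn // NegzE; lia.
Qed.

Lemma vge0 m : vge v 0 m. Proof. by left. Qed.

Lemma vge_le {x a b} : vge v x a -> b <= a -> vge v x b.
Proof. by case=> [->|h] ba; [left|right; apply: le_trans h]. Qed.

Lemma vge_self x : vge v x (v x). Proof. by right. Qed.

Lemma vgeP {x} m : x != 0 -> vge v x m <-> m <= v x.
Proof.
move=> x0; split=> [[e|//]|h]; last by right.
by move: x0; rewrite e eqxx.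
Qed.

Lemma vge_mul {x y a b} : vge v x a -> vge v y b -> vge v (x * y) (a + b).
Proof.
case=> [->|ha]; first by rewrite mul0r; left.
case=> [->|hb]; first by rewrite mulr0; left.
have [->|x0] := eqVneq x 0; first by rewrite mul0r; left.
have [->|y0] := eqVneq y 0; first by rewrite mulr0; left.
right; rewrite vM //; exact: lerD.
Qed.

Lemma vge_opp {x a} : vge v x a -> vge v (- x) a.
Proof.
case=> [->|h]; first by rewrite oppr0; left.
have [->|x0] := eqVneq x 0; first by rewrite oppr0; left.
by right; rewrite vN.
Qed.

Lemma vge_add {x y a} : vge v x a -> vge v y a -> vge v (x + y) a.
Proof.
case=> [->|ha]; first by rewrite add0r.
case=> [->|hb]; first by rewrite addr0; right.
have [->|x0] := eqVneq x 0; first by rewrite add0r; right.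
have [->|y0] := eqVneq y 0; first by rewrite addr0; right.
have [->|s0] := eqVneq (x + y) 0; first by left.
right; move: Hv; rewrite /is_dval => -[_ /(_ x y x0 y0 s0) h _]; apply: le_trans h.
by rewrite le_min ha hb.
Qed.

Lemma vge_sub {x y a} : vge v x a -> vge v y a -> vge v (x - y) a.
Proof. by move=> hx hy; apply: vge_add => //; apply: vge_opp. Qed.

Lemma vge_sum (I : Type) (s : seq I) (P : pred I) (g : I -> L) a :
  (forall i, P i -> vge v (g i) a) -> vge v (\sum_(i <- s | P i) g i) a.
Proof.
move=> h; apply: (big_ind (fun x => vge v x a)); first by left.
  by move=> x y; apply: vge_add.
exact: h.
Qed.

Lemma not_vge x : x != 0 -> ~ vge v x (v x + 1).
Proof. by move=> x0 /(@vgeP x _ x0); rewrite -[X in _ <= X]addr0 lerD2l. Qed.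

Lemma vstrict {y z} : y != 0 -> vge v z (v y + 1) -> y + z != 0 /\ v (y + z) = v y.
Proof.
move=> y0 hz.
have yz0 : y + z != 0.
  apply/negP => /eqP e; have ez : z = - y by rewrite -[z](addKr y) e addr0.
  by move: hz; rewrite ez => /vge_opp; rewrite opprK; apply: not_vge.
split => //.
have h1 : v y <= v (y + z).
  have := vge_add (vge_self y) (vge_le hz (lerDl _ _)); by case=> [/eqP|]; [rewrite (negbTE yz0)|].
apply/eqP; rewrite eq_le h1 andbT; rewrite leNgt; apply/negP => h2.
have : vge v y (v y + 1).
  have e : y = (y + z) + - z by rewrite addrK.
  rewrite {1}e.
  apply: vge_add; last exact: vge_opp.
  by right; lia.
exact: not_vge.
Qed.

Hypothesis Htr : totally_ramified v.
Variable pi : L.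
Hypothesis Hpi : pi != 0 /\ v pi = 1.

Local Notation n := (\dim (fullv : {vspace L})).

Lemma n_gt0 : (0 < n)%N.
Proof.
rewrite lt0n dimv_eq0; apply/eqP => h.
by have := memvf (1 : L); rewrite h memv0 oner_eq0.
Qed.

Lemma vF_div {a : F} : a != 0 -> (n%:Z %| v a%:A)%Z.
Proof. by case: Htr => h _; apply: h. Qed.

Lemma vpX (j : nat) : v (pi ^+ j) = j%:Z.
Proof. by case: Hpi => p0 p1; rewrite vXn // p1 mulr1. Qed.

Lemma vterm {a : F} (j : nat) : a != 0 -> v (a%:A * pi ^+ j) = v a%:A + j%:Z.
Proof.
move=> a0; case: Hpi => p0 _.
by rewrite vM // ?vpX // ?algA_eq0 // expf_neq0.
Qed.

Lemma term_min (a : 'I_n -> F) m :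
  vge v (\sum_(j < n) (a j)%:A * pi ^+ j) m ->
  forall j, vge v ((a j)%:A * pi ^+ j) m.
Proof.
move=> hS.
have me : forall j : 'I_n, j \in enum 'I_n by move=> j; rewrite mem_enum.
have [hall|hex] := boolP (has (fun j => a j != 0) (enum 'I_n)); last first.
  move=> j; move/hasPn: hex => /(_ j (me _)); rewrite negbK => /eqP->.
  by rewrite scale0r mul0r; left.
have [j0 [_ a0 hmin]] := ex_minz (fun j => v ((a j)%:A * pi ^+ j)) hall.
set T := fun j : 'I_n => (a j)%:A * pi ^+ j.
have T0 : T j0 != 0 by rewrite /T mulf_neq0 ?algA_eq0 ?expf_neq0 //; case: Hpi.
have hrest : vge v (\sum_(j < n | j != j0) T j) (v (T j0) + 1).
  apply: vge_sum => j jj0; rewrite /T.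
  have [->|aj] := eqVneq (a j) 0; first by rewrite scale0r mul0r; left.
  right; have := hmin j (me _) aj; rewrite /T !vterm //.
  have [p hp] := dvdzP (vF_div aj); have [q hq] := dvdzP (vF_div a0).
  rewrite hp hq => hle.
  have jn := ltn_ord j; have j0n := ltn_ord j0.
  have : (j : nat) != j0 by [].
  move: hle jn j0n; set J := (j : nat); set J0 := (j0 : nat) => hle jn j0n jj.
  have : J <> J0 by apply/eqP.
  move=> jJ; set N := \dim fullv in hle jn j0n *.
  have [pq|pq|pq] := ltgtP p q.
  - have : p + 1 <= q by lia.
    move=> h1; have : (p + 1) * N%:Z <= q * N%:Z by apply: ler_wpM2r.
    lia.
  - have : q + 1 <= p by lia.
    move=> h1; have : (q + 1) * N%:Z <= p * N%:Z by apply: ler_wpM2r.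
    lia.
  - rewrite pq in hle *; lia.
have [_ ev] := vstrict T0 hrest.
move: hS; rewrite (bigD1 j0) //= -/(T j0) => hS.
have hm : m <= v (T j0).
  have nz := (vstrict T0 hrest).1.
  by move/(@vgeP _ _ nz): hS; rewrite ev.
move=> j; have [->|aj] := eqVneq (a j) 0; first by rewrite scale0r mul0r; left.
right; apply: le_trans hm _; exact: hmin (me _) aj.
Qed.



Lemma int_aux2 (p N J : int) : 0 < J -> J < N -> 0 <= p * N + J -> 1 <= p * N + J.
Proof.
move=> J0 JN h; have [pn|pn] := ltP p 0.
  have h1 : p <= -1 by lia.
  have N0 : 0 <= N by lia.
  have := ler_wpM2r N0 h1; rewrite mulN1r => h2.
  lia.
have : 0 <= p * N by apply: mulr_ge0 => //; lia.
lia.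
Qed.

Lemma int_aux (J N t A X : int) : 0 <= J -> J <= N -> X <= A + J ->
  X - N * ((t - 1) * (t - 1)) <= A + J * t.
Proof.
move=> J0 JN h.
have h2 : 0 <= (t - 1) * (t - 1) by nia.
have h2' : 0 <= (t - 1) * (t - 1) + (t - 1) by have [tt|tt] := lerP t 0; nia.
have h3 : 0 <= J * ((t - 1) * (t - 1) + (t - 1)) by apply: mulr_ge0.
have h4 : J * ((t - 1) * (t - 1)) <= N * ((t - 1) * (t - 1)) by apply: ler_wpM2r.
nia.
Qed.

Lemma term0 (a : 'I_n -> F) :
  \sum_(j < n) (a j)%:A * pi ^+ j = 0 -> forall j, a j = 0.
Proof.
move=> h j; have := @term_min a (v ((a j)%:A * pi ^+ j) + 1).
rewrite h => /(_ (vge0 _) j).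
have [//|aj] := eqVneq (a j) 0.
have nz : (a j)%:A * pi ^+ j != 0 by rewrite mulf_neq0 ?algA_eq0 ?expf_neq0 //; case: Hpi.
by move/not_vge: nz.
Qed.

Lemma decomp x : exists a : 'I_n -> F, x = \sum_(j < n) (a j)%:A * pi ^+ j.
Proof.
pose X := [tuple pi ^+ (val j) | j < n].
have XE : forall (j : 'I_n), X`_j = pi ^+ j.
  by move=> j; rewrite -tnth_nth tnth_mktuple.
have fX : free X.
  apply/freeP => k hk; apply: term0; rewrite -[RHS]hk.
  by apply: eq_bigr => j _; rewrite XE mulr_algl.
have bX : basis_of fullv X by rewrite basisEfree fX subvf size_tuple leqnn.
exists (fun j => coord X j x); rewrite {1}(coord_basis bX (memvf x)).
by apply: eq_bigr => j _; rewrite XE mulr_algl.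
Qed.

Lemma gal_lb (s : galG L) : exists C : int, forall x, x != 0 -> vge v (s x) (v x - C).
Proof.
case: Hpi => p0 p1.
have sp0 : s pi != 0 by rewrite fmorph_eq0.
set t := v (s pi).
exists (n%:Z * ((t - 1) * (t - 1))) => x x0.
have [a ex] := decomp x.
have hx : forall j, vge v ((a j)%:A * pi ^+ j) (v x).
  by apply: term_min; rewrite -ex; apply: vge_self.
rewrite {1}ex rmorph_sum; apply: vge_sum => j _.
rewrite rmorphM rmorphXn (_ : _ (a j)%:A = (a j)%:A); last exact: fixA.
have [->|aj] := eqVneq (a j) 0; first by rewrite scale0r mul0r; left.
right; move: (hx j); rewrite (@vgeP _ _ (mulf_neq0 _ _)) ?algA_eq0 ?expf_neq0 //.
rewrite !vM ?algA_eq0 ?expf_neq0 // !vXn // p1 mulr1.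
have := ltn_ord j; set J := (j : nat) => jn hj.
apply: int_aux hj; first by rewrite lez_nat.
by rewrite lez_nat ltnW.
Qed.

Lemma resid_ex w : vge v w 0 -> exists a : F, vge v (w - a%:A) 1.
Proof.
move=> w0; have [a ex] := decomp w.
have hw : forall j, vge v ((a j)%:A * pi ^+ j) 0.
  by apply: term_min; rewrite -ex.
pose j0 := Ordinal n_gt0.
exists (a j0); rewrite ex (bigD1 j0) //= expr0 mulr1 addrC addrK.
apply: vge_sum => j jj0.
have [->|aj] := eqVneq (a j) 0; first by rewrite scale0r mul0r; left.
right; move: (hw j); rewrite (@vgeP _ _ (mulf_neq0 _ _)) ?algA_eq0 ?expf_neq0 //; last by case: Hpi.
rewrite vterm //.
have [p hp] := dvdzP (vF_div aj); rewrite hp.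
have := ltn_ord j; have : (j : nat) != 0%N by [].
set J := (j : nat) => jnz jn hj.
have : (0 < J)%N by rewrite lt0n.
move=> J0; apply: int_aux2 hj; first by rewrite ltz_nat.
by rewrite ltz_nat.
Qed.

Lemma act0x (f : KG L) : Defs.act f 0 = 0.
Proof. by rewrite /Defs.act big1 // => s _; rewrite rmorph0 mulr0. Qed.

Lemma actD (f : KG L) y z : Defs.act f (y + z) = Defs.act f y + Defs.act f z.
Proof. by rewrite /Defs.act -big_split; apply: eq_bigr => s _; rewrite rmorphD mulrDr. Qed.

Lemma actA (f : KG L) (a : F) y : Defs.act f (a%:A * y) = a%:A * Defs.act f y.
Proof.
rewrite /Defs.act mulr_sumr; apply: eq_bigr => s _.
by rewrite rmorphM mulrCA; congr (_ * _); exact: fixA.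
Qed.

Lemma act_lincomb (B : seq (KG L)) (c : KG L -> F) x :
  Defs.act (lincomb B c) x = \sum_(b <- B) (c b)%:A * Defs.act b x.
Proof.
rewrite /Defs.act /lincomb; under eq_bigr do rewrite ffunE mulr_suml.
rewrite exchange_big /=; apply: eq_bigr => b _; rewrite mulr_sumr.
by apply: eq_bigr => s _; rewrite mulrA.
Qed.

Lemma inC_vge {i} {f : KG L} {y m} : inC v i f -> vge v y m -> vge v (Defs.act f y) (m + i).
Proof.
move=> hf hy; have [->|y0] := eqVneq y 0; first by rewrite act0x; left.
apply: vge_le (hf y y0) _; rewrite lerD2r; exact/(vgeP _ y0).
Qed.

Lemma inC_mono {i j} {f : KG L} : inC v i f -> j <= i -> inC v j f.
Proof. by move=> hf ji x x0; apply: vge_le (hf x x0) _; rewrite lerD2l. Qed.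

Lemma inC_lb (f : KG L) : exists i, inC v i f.
Proof.
suff : forall l : seq (galG L), exists i, forall x, x != 0 ->
    vge v (\sum_(s <- l) f s * s x) (v x + i).
  by case/(_ (index_enum _)) => i hi; exists i; exact: hi.
elim => [|s l [i hi]]; first by exists 0 => x _; rewrite big_nil; left.
have [C hC] := gal_lb s.
have [j hj] : exists j, forall x, x != 0 -> vge v (f s * s x) (v x + j).
  have [->|fs0] := eqVneq (f s) 0; first by exists 0 => x _; rewrite mul0r; left.
  exists (v (f s) - C) => x x0.
  apply: vge_le (vge_mul (vge_self (f s)) (hC x x0)) _; lia.
exists (Num.min i j) => x x0; rewrite big_cons; apply: vge_add.
  by apply: vge_le (hj x x0) _; rewrite lerD2l ge_min lexx orbT.
by apply: vge_le (hi x x0) _; rewrite lerD2l ge_min lexx.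
Qed.

Variable d : int.

Lemma depth_spec {f : KG L} : ~ (forall i, inC v i f) ->
  inC v (depth v d f + d) f /\ ~ inC v (depth v d f + d + 1) f.
Proof.
move=> hn.
have ex : exists i : int, inC v (i + d) f /\ ~ inC v (i + d + 1) f.
  have [i hi] := inC_lb f.
  have [j hj] : exists j, ~ inC v j f.
    by apply: Classical_Prop.NNPP => h; apply: hn => k; apply: Classical_Prop.NNPP => hk; apply: h; exists k.
  have ij : i < j by rewrite ltNge; apply/negP => ji; apply: hj; exact: inC_mono hi ji.
  suff : forall k : nat, forall i, inC v i f -> ~ inC v (i + k%:Z) f ->
      exists i', inC v i' f /\ ~ inC v (i' + 1) f.
    move=> /(_ `|j - i|%N i hi); have -> : i + (`|j - i|%N)%:Z = j by rewrite gtz0_abs ?subr_gt0 //; lia.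
    move=> /(_ hj) [i' [h1 h2]].
    by exists (i' - d); rewrite subrK.
  elim => [|k IH] i' hi' hk; first by rewrite addr0 in hk.
  have [h|h] := Classical_Prop.classic (inC v (i' + 1) f); last by exists i'.
  apply: IH h _; have -> : i' + 1 + k%:Z = i' + k.+1%:Z by lia.
  exact: hk.
rewrite /depth; case: excluded_middle_informative => [h|//].
by case: constructive_indefinite_description.
Qed.

Lemma depth_uniq {f : KG L} {m} : inC v (m + d) f -> ~ inC v (m + d + 1) f ->
  depth v d f = m.
Proof.
move=> h1 h2.
have hn : ~ (forall i, inC v i f) by move=> h; apply: h2; apply: h.
have [g1 g2] := depth_spec hn.
apply/eqP; rewrite eq_le; apply/andP; split; rewrite leNgt; apply/negP => lt.
  by apply: h2; apply: inC_mono g1 _; lia.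
by apply: g2; apply: inC_mono h1 _; lia.
Qed.


Variable kbar : fieldType.
Variable r : L -> kbar.
Hypothesis Hr : residue_map v r.

Lemma rD x y : vge v x 0 -> vge v y 0 -> r (x + y) = r x + r y.
Proof. by move: Hr; rewrite /residue_map => -[h _ _ _ _]; apply: h. Qed.

Lemma rM x y : vge v x 0 -> vge v y 0 -> r (x * y) = r x * r y.
Proof. by move: Hr; rewrite /residue_map => -[_ h _ _ _]; apply: h. Qed.

Lemma r_vge1 {x} : vge v x 1 -> r x = 0.
Proof.
move=> h; move: Hr; rewrite /residue_map => -[_ _ _ _ /(_ x (vge_le h ler01))].
by case=> _; apply.
Qed.

Lemma r0 : r 0 = 0.
Proof. by apply: r_vge1; left. Qed.

Lemma r_ne0 x : x != 0 -> v x = 0 -> r x != 0.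
Proof.
move=> x0 vx; move: Hr; rewrite /residue_map => -[_ _ _ _ /(_ x)].
have hx : vge v x 0 by right; rewrite vx.
case/(_ hx) => h _; apply/eqP => /h.
have -> : (1 : int) = v x + 1 by rewrite vx.
exact: not_vge.
Qed.

Lemma r_sum (I : Type) (s : seq I) (P : pred I) (g : I -> L) :
  (forall i, P i -> vge v (g i) 0) ->
  r (\sum_(i <- s | P i) g i) = \sum_(i <- s | P i) r (g i).
Proof.
move=> h; elim: s => [|a s IH]; first by rewrite !big_nil r0.
rewrite !big_cons; case: ifP => Pa //.
by rewrite rD ?IH //; [apply: h | apply: vge_sum].
Qed.

Definition resid (w : L) : F := epsilon (inhabits 0) (fun a => vge v (w - a%:A) 1).

Lemma residP w : vge v w 0 -> vge v (w - (resid w)%:A) 1.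
Proof.
move=> w0; rewrite /resid; apply: (epsilon_spec (inhabits 0) (fun a : F => vge v (w - a%:A) 1)).
exact: resid_ex.
Qed.

Lemma vpz (z : int) : v (pi ^ z) = z.
Proof. by case: Hpi => p0 p1; rewrite vXz // p1 mulr1. Qed.

Lemma pz0 (z : int) : pi ^ z != 0.
Proof. by case: Hpi => p0 _; rewrite expfz_neq0. Qed.

Lemma vge_pz (z : int) : vge v (pi ^ z) z.
Proof. by right; rewrite vpz. Qed.

Lemma vge_pinv (j : nat) : vge v ((pi ^+ j)^-1) (- j%:Z).
Proof.
case: Hpi => p0 _; right; rewrite vV ?expf_neq0 // vpX //.
Qed.

Lemma entry_vge {f : KG L} {i} (j : nat) {k} :
  inC v (i + k) f -> vge v (Defs.act f (pi ^ (j%:Z - i)) / pi ^+ j) k.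
Proof.
move=> hf; apply: vge_le (vge_mul (inC_vge hf (vge_pz _)) (vge_pinv j)) _; lia.
Qed.

Lemma p_zero {i} {f : KG L} : inC v (i + 1) f -> p_ r d pi i f = 0.
Proof.
move=> hf; rewrite /p_ big1 // => j _.
by rewrite (r_vge1 (entry_vge j hf)) mulr0 mul0r.
Qed.

Lemma p_act0 i (f : KG L) : (forall x, Defs.act f x = 0) -> p_ r d pi i f = 0.
Proof.
by move=> h; rewrite /p_ big1 // => j _; rewrite h mul0r r0 mulr0 mul0r.
Qed.


Definition sel (c : KG L -> F) (m : int) (b : KG L) :=
  (c b != 0) && (v (c b)%:A + depth v d b == m).
Definition lam (c : KG L -> F) (b : KG L) : kbar :=
  r ((resid ((c b)%:A * pi ^ (- v (c b)%:A)))%:A).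

Lemma w_prop {a : F} : a != 0 ->
  a%:A * pi ^ (- v a%:A) != 0 /\ v (a%:A * pi ^ (- v a%:A)) = 0.
Proof.
move=> a0; have a0' : a%:A != 0 :> L by rewrite algA_eq0.
split; first by rewrite mulf_neq0 ?pz0.
rewrite vM ?pz0 // vpz; lia.
Qed.

Lemma lam_ne0 c b : c b != 0 -> lam c b != 0.
Proof.
move=> c0; have [w0 vw] := w_prop c0; rewrite /lam.
set w := _ * _ in w0 vw *; set a := resid w.
have hz : vge v (w - a%:A) 1 by apply: residP; right; rewrite vw.
have hz' : vge v (- (w - a%:A)) (v w + 1) by rewrite vw; apply: vge_opp.
have [nz ev] := vstrict w0 hz'.
have ea : w + - (w - a%:A) = a%:A by rewrite opprB addrC subrK.
rewrite ea in nz ev; apply: r_ne0 => //; by rewrite ev.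
Qed.

Lemma term_eval c m b (j : nat) : inC v (depth v d b + d) b ->
  (c b != 0 -> m <= v (c b)%:A + depth v d b) ->
  vge v ((c b)%:A * Defs.act b (pi ^ (j%:Z - (m + d))) / pi ^+ j) 0 /\
  r ((c b)%:A * Defs.act b (pi ^ (j%:Z - (m + d))) / pi ^+ j) =
  (if sel c m b then lam c b * r (Defs.act b (pi ^ (j%:Z - (depth v d b + d))) / pi ^+ j)
   else 0).
Proof.
move=> hb hm; rewrite /sel.
have [c0|c0] := eqVneq (c b) 0.
  by rewrite c0 scale0r !mul0r r0 /=; split => //; left.
have hme := hm c0; rewrite /=.
have hX := vge_mul (vge_mul (vge_self (c b)%:A) (inC_vge hb (vge_pz (j%:Z - (m + d))))) (vge_pinv j).
case: eqP => [em|ne]; last first.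
  have h1 : vge v ((c b)%:A * Defs.act b (pi ^ (j%:Z - (m + d))) / pi ^+ j) 1.
    apply: vge_le hX _.
    have : v (c b)%:A + depth v d b != m by apply/eqP.
    lia.
  by split; [apply: vge_le h1 _ | rewrite r_vge1].
split; first by apply: vge_le hX _; lia.
have [w0 vw] := w_prop c0; rewrite /lam.
set w := (c b)%:A * pi ^ (- v (c b)%:A) in w0 vw *.
set a := resid w.
have hz : vge v (w - a%:A) 1 by apply: residP; right; rewrite vw.
set z := w - a%:A in hz.
have ha : vge v a%:A 0.
  have -> : a%:A = w - z by rewrite /z opprB addrC subrK.
  by apply: vge_sub; [right; rewrite vw | apply: vge_le hz _].
set e := depth v d b in em hb *.
set y' := pi ^ (j%:Z - (e + d)).
have ey : (c b)%:A * pi ^ (j%:Z - (m + d)) = w * y'.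
  rewrite /w /y' -mulrA -expfzDr; last by case: Hpi.
  congr (_ * pi ^ _); move: em; set V := v (c b)%:A => em; lia.
have eact : Defs.act b (w * y') = a%:A * Defs.act b y' + Defs.act b (z * y').
  by rewrite -actA -actD -mulrDl /z addrC subrK.
have hA : vge v (Defs.act b y' / pi ^+ j) 0.
  by apply: vge_le (vge_mul (inC_vge hb (vge_pz _)) (vge_pinv j)) _; lia.
have hZ : vge v (Defs.act b (z * y') / pi ^+ j) 1.
  by apply: vge_le (vge_mul (inC_vge hb (vge_mul hz (vge_pz _))) (vge_pinv j)) _; lia.
rewrite -actA ey eact mulrDl -mulrA rD; last 2 first.
- by apply: vge_le (vge_mul ha hA) _.
- by apply: vge_le hZ _.
by rewrite (rM _ _ ha hA) (r_vge1 hZ) addr0.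
Qed.


Variable B : seq (KG L).
Hypothesis HBind : graded_independent v r d pi B.

Lemma p_lincomb c m :
  (forall b, b \in B -> inC v (depth v d b + d) b) ->
  (forall b, b \in B -> c b != 0 -> m <= v (c b)%:A + depth v d b) ->
  p_ r d pi (m + d) (lincomb B c) =
  \sum_(b <- B | sel c m b) lam c b *: frakp v r d pi b.
Proof.
move=> hB hm.
set rc := r (galTrace 1 fullv (pi ^ (- d))).
have E : forall j : 'I_n,
    r (Defs.act (lincomb B c) (pi ^ (j%:Z - (m + d))) / pi ^+ j) =
    \sum_(b <- B | sel c m b)
       lam c b * r (Defs.act b (pi ^ (j%:Z - (depth v d b + d))) / pi ^+ j).
  move=> j; rewrite act_lincomb mulr_suml big_seq r_sum => [|b bB]; last first.
    exact: (term_eval c m b j (hB b bB) (hm b bB)).1.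
  rewrite [RHS]big_mkcond /= [RHS]big_seq.
  apply: eq_bigr => b bB.
  exact: (term_eval c m b j (hB b bB) (hm b bB)).2.
rewrite /p_; under eq_bigr do rewrite E.
under [RHS]eq_bigr do rewrite /frakp /p_ scaler_sumr.
rewrite exchange_big /=; apply: eq_bigr => j _.
rewrite mulr_sumr rmorph_sum mulr_suml; apply: eq_bigr => b _.
by rewrite scalerAl -mul_polyC -polyCM mulrCA.
Qed.



Lemma frakp_ne0 {b} : b \in B -> frakp v r d pi b != 0.
Proof.
move=> bB; apply/negP => /eqP h.
have := HBind (depth v d b) (fun x => (x == b)%:R).
move=> /(_ _ b bB (eqxx _)) /eqP; rewrite eqxx oner_eq0 => H; suff: false by []; apply: H.
apply: big1 => x _; case: eqP => [->|_]; first by rewrite h scaler0.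
by rewrite scale0r.
Qed.

Lemma HBd {b} : b \in B -> inC v (depth v d b + d) b.
Proof.
move=> bB.
suff h : ~ (forall i, inC v i b) by case: (depth_spec h).
move=> hall; apply: (negP (frakp_ne0 bB)); apply/eqP; rewrite /frakp p_act0 // => x.
have [->|x0] := eqVneq x 0; first exact: act0x.
have [//|a0] := eqVneq (Defs.act b x) 0.
have := hall (v (Defs.act b x) - v x + 1) x x0.
have -> : v x + (v (Defs.act b x) - v x + 1) = v (Defs.act b x) + 1 by lia.
by move/not_vge => /(_ a0).
Qed.

Lemma sel_mod {c m b} : sel c m b -> (depth v d b == m %[mod n%:Z])%Z.
Proof.
case/andP => c0 /eqP em; rewrite eqz_mod_dvd.
move: em (vF_div c0); set V := v (c b)%:A => em.
have -> : depth v d b - m = - V by lia.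
by rewrite rpredN.
Qed.

Lemma part1 c m :
  (exists2 b, b \in B & c b != 0 /\ v (c b)%:A + depth v d b = m) ->
  (forall b, b \in B -> c b != 0 -> m <= v (c b)%:A + depth v d b) ->
  [/\ inC v (m + d) (lincomb B c), ~ inC v (m + d + 1) (lincomb B c),
      depth v d (lincomb B c) = m &
      frakp v r d pi (lincomb B c) = \sum_(b <- B | sel c m b) lam c b *: frakp v r d pi b].
Proof.
move=> [b0 b0B [cb0 eb0]] hm.
have hin : inC v (m + d) (lincomb B c).
  move=> x x0; rewrite act_lincomb big_seq; apply: vge_sum => b bB.
  have [->|c0] := eqVneq (c b) 0; first by rewrite scale0r mul0r; left.
  apply: vge_le (vge_mul (vge_self _) (inC_vge (HBd bB) (vge_self x))) _.
  move: (hm b bB c0); set V := v (c b)%:A => hV; lia.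
have hout : ~ inC v (m + d + 1) (lincomb B c).
  move=> hin1; have := p_zero hin1; rewrite (p_lincomb c m (fun b bB => @HBd b bB) hm).
  move=> h0.
  have := HBind m (fun b => if sel c m b then lam c b else 0).
  have sb0 : sel c m b0 by rewrite /sel cb0 /= eb0 eqxx.
  have e : \sum_(b <- B | (depth v d b == m %[mod n%:Z])%Z)
      (if sel c m b then lam c b else 0) *: frakp v r d pi b = 0.
    apply: etrans h0; rewrite big_mkcond [RHS]big_mkcond; apply: eq_bigr => b _.
    case sb: (sel c m b); first by rewrite (sel_mod sb).
    by case: ifP; rewrite ?scale0r.
  move=> /(_ e b0 b0B (sel_mod sb0)); rewrite sb0 => h.
  by move: (lam_ne0 c b0 cb0); rewrite h eqxx.
have hd := depth_uniq hin hout.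
split => //; by rewrite /frakp hd (p_lincomb c m (fun b bB => @HBd b bB) hm).
Qed.



Variable pik : F.
Hypothesis Hpik : pik != 0 /\ v pik%:A = n%:Z.

Lemma vpikz (e : int) : v (pik ^ e)%:A = e * n%:Z.
Proof.
case: Hpik => p0 p1.
rewrite alg_X.
by rewrite vXz ?algA_eq0 // p1.
Qed.

Lemma int_ceil1 (q t N : int) : 0 < N -> q <= t * N -> ((q - 1) %/ N)%Z + 1 <= t.
Proof.
move=> N0 h; have : ((q - 1) %/ N)%Z < t by rewrite ltz_divLR //; lia.
lia.
Qed.

Lemma int_ceil2 (q N : int) : 0 < N -> q <= ((((q - 1) %/ N)%Z + 1) * N).
Proof. move=> N0; have := ltz_ceil (q - 1) N0; lia. Qed.

Lemma nZ_gt0 : 0 < n%:Z.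
Proof. by rewrite ltz_nat n_gt0. Qed.

Lemma part2 i (f : KG L) :
  (inC v i f /\ exists c : KG L -> F, f = lincomb B c) <->
  (exists c : KG L -> F, f = lincomb B c /\
     forall b, b \in B ->
       exists2 u : F, (u == 0) || (0 <= v u%:A) &
         c b = pik ^ (((i - d - depth v d b - 1) %/ n%:Z)%Z + 1) * u).
Proof.
split.
  case=> hin [c ef]; exists c; split => // b bB.
  set e := (_ + 1)%R.
  have [c0|c0] := eqVneq (c b) 0; first by exists 0; rewrite ?eqxx // c0 mulr0.
  have hP : has (fun b => c b != 0) B by apply/hasP; exists b.
  have [b0 [b0B cb0 hmin]] := ex_minz (fun b => v (c b)%:A + depth v d b) hP.
  have [_ hout _ _] := part1 c (v (c b0)%:A + depth v d b0) (ex_intro2 _ _ b0 b0B (conj cb0 (erefl _))) hmin.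
  have hb := hmin b bB c0.
  have him : i <= v (c b0)%:A + depth v d b0 + d.
    rewrite leNgt; apply/negP => lt; apply: hout; rewrite -ef.
    by apply: inC_mono hin _; lia.
  have pe0 : pik ^ e != 0 by rewrite expfz_neq0; case: Hpik.
  set u := c b / pik ^ e.
  have ecb : c b = pik ^ e * u by rewrite /u mulrC divfK.
  exists u => //; apply/orP; right.
  have u0 : u != 0 by rewrite /u mulf_neq0 ?invr_eq0.
  have := @vM (pik ^ e)%:A u%:A; rewrite !algA_eq0 => /(_ pe0 u0).
  rewrite -alg_mul -ecb vpikz => hv.
  have [t ht] := dvdzP (vF_div c0).
  move: hb him ht hv; set V := v (c b)%:A; set V0 := v (c b0)%:A => hb him ht hv.
  have := @int_ceil1 (i - d - depth v d b) t n%:Z nZ_gt0 (_ : _ <= _); rewrite -/e.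
  move=> /(_ _) h; have {}h := h ltac:(lia).
  have : e * n%:Z <= t * n%:Z by apply: ler_wpM2r => //; exact: ltW nZ_gt0.
  lia.
case=> c [ef hc]; split; last by exists c.
move=> x x0; rewrite ef act_lincomb big_seq; apply: vge_sum => b bB.
have [u hu ecb] := hc b bB.
have [c0|c0] := eqVneq (c b) 0; first by rewrite c0 scale0r mul0r; left.
have u0 : u != 0 by apply: contraNneq c0 => u0; rewrite ecb u0 mulr0.
move: hu; rewrite (negbTE u0) /= => hu.
apply: vge_le (vge_mul (vge_self _) (inC_vge (HBd bB) (vge_self x))) _.
rewrite ecb.
rewrite alg_mul.
rewrite vM ?algA_eq0 ?expfz_neq0 //; last by case: Hpik.
rewrite vpikz.
have := int_ceil2 (i - d - depth v d b) n%:Z nZ_gt0.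
lia.
Qed.



Definition coefF (x : L) : F := epsilon (inhabits 0) (fun a => x = a%:A).

Lemma coefFP x : x \in (1%VS : {vspace L}) -> x = (coefF x)%:A.
Proof.
move=> x1; rewrite /coefF; apply: (epsilon_spec (inhabits 0) (fun a : F => x = a%:A)).
by case/vlineP: x1 => a ->; exists a.
Qed.

Lemma galT (s : galG L) : s \in 'Gal(fullv / 1%VS)%g.
Proof. rewrite gal_kHom ?sub1v //; apply/kAHomP => a /vlineP[k ->]; exact: fixA. Qed.

Hypothesis Hgal : galois (1%VS : {vspace L}) fullv.

Lemma cardG : #|{: gal_of (fullv : {vspace L})}| = n.
Proof.
have := galois_dim Hgal; rewrite dimv1 divn1 => ->.
have -> : 'Gal(fullv / 1%VS)%g = [set: gal_of (fullv : {vspace L})] by apply/setP => s; rewrite inE galT.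
by rewrite cardsT.
Qed.

Hypothesis HBuniq : uniq B.

Lemma part3 : size B = n -> (forall b, b \in B -> in_kG b) -> graded_base v r d pi B.
Proof.
move=> hsz hkG; split => // f hf.
set N := #|{: gal_of (fullv : {vspace L})}|.
have hN : size B = N by rewrite hsz /N cardG.
pose M : 'M[F]_N := \matrix_(k, l) coefF (nth 0 B k (enum_val l)).
pose cof (w : 'rV[F]_N) : KG L -> F := fun b => \sum_(k < N | nth 0 B k == b) w 0 k.
have cofE : forall w (k : 'I_N), cof w (nth 0 B k) = w 0 k.
  move=> w k; rewrite /cof (eq_bigl (fun k' => k' == k)) ?big_pred1_eq // => k'.
  by rewrite nth_uniq ?hN.
have lin_w : forall w, lincomb B (cof w) = [ffun s => ((w *m M) 0 (enum_rank s))%:A].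
  move=> w; apply/ffunP => s; rewrite !ffunE mxE.
  rewrite (big_nth 0) hN big_mkord -[_%:A]/(in_alg L _) rmorph_sum /=.
  apply: eq_bigr => k _; rewrite cofE mxE enum_rankK alg_mul -coefFP //.
  by apply: hkG; rewrite mem_nth ?hN.
have hdet : \det M != 0.
  apply/negP => /det0P [w w0 wM].
  have hk : exists k, w 0 k != 0.
    apply: Classical_Prop.NNPP => h; move/eqP: w0; apply; apply/rowP => k; rewrite mxE.
    by apply/eqP; apply: Classical_Prop.NNPP => hk; apply: h; exists k; apply/negP.
  case: hk => k wk.
  have l0 : lincomb B (cof w) = 0.
    by rewrite lin_w wM; apply/ffunP => s; rewrite !ffunE mxE scale0r.
  have bB : nth 0 B k \in B by rewrite mem_nth ?hN.
  have hP : has (fun b => cof w b != 0) B by apply/hasP; exists (nth 0 B k); rewrite ?cofE.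
  have [b0 [b0B cb0 hmin]] := ex_minz (fun b => v (cof w b)%:A + depth v d b) hP.
  have [_ hout _ _] := part1 (cof w) (v (cof w b0)%:A + depth v d b0)
      (ex_intro2 _ _ b0 b0B (conj cb0 (erefl _))) hmin.
  apply: hout; rewrite l0 => x _; left.
  by rewrite /Defs.act big1 // => s _; rewrite ffunE mul0r.
have uM : M \in unitmx by rewrite unitmxE unitfE.
pose g : 'rV[F]_N := \row_l coefF (f (enum_val l)).
exists (cof (g *m invmx M)); rewrite lin_w mulmxKV //.
by apply/ffunP => s; rewrite ffunE mxE enum_rankK -coefFP.
Qed.

End Val.
Theorem proposition3p1p2
  (F : fieldType) (L : splittingFieldType F)
  (Hgal : galois (1%VS : {vspace L}) fullv)
  (v : L -> int) (Hv : is_dval v)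
  (HcK : complete_K v) (Hck : complete_k v)
  (Htr : totally_ramified v)
  (kbar : fieldType) (r : L -> kbar) (Hr : residue_map v r)
  (d : int) (Hd : different_val v (d + (\dim (fullv : {vspace L}))%:Z - 1))
  (pi : L) (Hpi : pi != 0 /\ v pi = 1)
  (pik : F) (Hpik : pik != 0 /\ v pik%:A = (\dim (fullv : {vspace L}))%:Z)
  (B : seq (KG L)) (HBuniq : uniq B) (HB0 : forall b, b \in B -> b != 0)
  (HBind : graded_independent v r d pi B) :
  (* part 1 *)
  (forall (c : KG L -> F) (m : int),
     (exists2 b, b \in B & c b != 0 /\ v (c b)%:A + depth v d b = m) ->
     (forall b, b \in B -> c b != 0 -> m <= v (c b)%:A + depth v d b) ->
     depth v d (lincomb B c) = m /\
     exists lam : KG L -> kbar,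
       (forall b, b \in B -> c b != 0 -> v (c b)%:A + depth v d b = m ->
          lam b != 0) /\
       frakp v r d pi (lincomb B c) =
       \sum_(b <- B | (c b != 0) && (v (c b)%:A + depth v d b == m))
          lam b *: frakp v r d pi b)
  /\
  (* part 2 *)
  (forall (i : int) (f : KG L),
     (inC v i f /\ exists c : KG L -> F, f = lincomb B c) <->
     (exists c : KG L -> F, f = lincomb B c /\
        forall b, b \in B ->
          exists2 u : F, (u == 0) || (0 <= v u%:A) &
            c b = pik ^ (((i - d - depth v d b - 1) %/
                           (\dim (fullv : {vspace L}))%:Z)%Z + 1) * u))
  /\
  (size B = \dim (fullv : {vspace L}) -> (forall b, b \in B -> in_kG b) ->
     graded_base v r d pi B).
Proof.
split.
  move=> c m hex hm.
  have [_ _ hd hfr] := @part1 _ _ v Hv Htr pi Hpi d kbar r Hr B HBind c m hex hm.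
  split => //; exists (@lam _ _ v pi kbar r c); split.
    by move=> b _ cb _; apply: (@lam_ne0 _ _ v Hv Htr pi Hpi kbar r Hr).
  exact: hfr.
split.
  by move=> i f; apply: (@part2 _ _ v Hv Htr pi Hpi d kbar r Hr B HBind pik Hpik).
by move=> hsz hkG; apply: (@part3 _ _ v Hv Htr pi Hpi d kbar r Hr B HBind Hgal HBuniq).
Qed.
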